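(* Let $s\ge 2$ and $t\ge 2$ be integers, $p=st$, and let $\xi_1,\dots,\xi_s$ be positive integers with $\binom{p-t}{(r-1)t+1}\xi_r=\binom{p-t}{rt}\xi_{r+1}$ for $2\le r\le s-1$ and $(s-1)\xi_1=\binom{p-t}{t}\xi_2$. Let $\mathcal{C}$ be the array code (over a finite field $\mathbb{F}$, with $t$ rows, entries in $\mathbb{F}^p$ with basis $x_1,\dots,x_p$) whose columns are: (Type $T_1$) for each $t$-subset $A\subseteq\{1,\dots,p\}$, $\xi_1$ columns with cells $x_a$, $a\in A$; and (Type $T_r$, for each $2\le r\le s$) for each $(t-1)$-subset $B\subseteq\{1,\dots,p\}$ and each $((r-1)t+1)$-subset $C\subseteq\{1,\dots,p\}\setminus B$, $\xi_r$ columns whose cells are $x_b$ for $b\in B$ together with one cell $\sum_{c\in C}x_c$. Let $m$ be the number of columns of $\mathcal{C}$. Then $\mathcal{C}$ is a $[t\times m,p]$ $k$-PIR array code with PIR rate $k/m=(\beta+\gamma)/(\beta+2\gamma)$, where \[ \beta=\xi_1(p-t+1)+\sum_{r=2}^{s}(t-1)\xi_r\binom{p-t+1}{(r-1)t+1},\qquad \gamma=(p-t+1)\sum_{r=1}^{s-1}\xi_{r+1}\binom{p-t}{rt}. \]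
   Context: A $[t\times m,p]$ array code is a $t\times m$ array whose entries are linear combinations of a basis $x_1,\dots,x_p$ of $\mathbb{F}^p$. It has the $k$-PIR property (is a $k$-PIR array code) if for every $i$ there exist $k$ pairwise disjoint sets $S_1,\dots,S_k$ of columns such that for each $j$ the vector $x_i$ lies in the span of all entries of the columns in $S_j$. Its PIR rate is $k/m$. *)

(* Defs.v *)
From HB Require Import structures.
From mathcomp Require Import all_boot all_order all_algebra.
Set Implicit Arguments. Unset Strict Implicit. Unset Printing Implicit Defensive.
Import GRing.Theory.
Local Open Scope ring_scope.

Section ArrayCode.
Variables (F : fieldType) (t p : nat).

(* An array code [t x m, p]: a sequence of m columns; a column is a t x p matrix
   whose i-th row is the i-th cell (a vector of F^p written in the basis x_1..x_p,
   where x_a is the unit row vector delta_mx 0 a). *)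
Definition unitv (a : 'I_p) : 'rV[F]_p := delta_mx 0 a.

(* column whose cells are the listed vectors (padded with 0 if too short) *)
Definition mkcol (cells : seq 'rV[F]_p) : 'M[F]_(t, p) :=
  \matrix_(i < t, j < p) (nth 0 cells i) 0 j.

Definition cols_span (C : seq 'M[F]_(t, p)) (S : {set 'I_(size C)}) : 'M[F]_p :=
  (\sum_(c in S) <<nth 0 C c>>)%MS.

Definition is_kPIR (C : seq 'M[F]_(t, p)) (k : nat) : Prop :=
  forall i : 'I_p, exists S : 'I_k -> {set 'I_(size C)},
    (forall j j' : 'I_k, j != j' -> [disjoint S j & S j']) /\
    (forall j : 'I_k, (unitv i <= cols_span (S j))%MS).
End ArrayCode.

Section Construction.
Variables (F : fieldType) (s t p : nat) (xi : nat -> nat).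

Definition colsT1 : seq 'M[F]_(t, p) :=
  flatten (map (fun A : {set 'I_p} =>
                  nseq (xi 1) (mkcol t (map (@unitv F p) (enum A))))
             (enum [set A : {set 'I_p} | #|A| == t])).

Definition colsTr (r : nat) : seq 'M[F]_(t, p) :=
  flatten (map (fun BC : {set 'I_p} * {set 'I_p} => nseq (xi r)
             (mkcol t (map (@unitv F p) (enum BC.1) ++
                       [:: \sum_(c in BC.2) unitv F c])))
          (enum [set BC : {set 'I_p} * {set 'I_p} |
                          [&& #|BC.1| == t.-1, #|BC.2| == ((r - 1) * t).+1
                            & [disjoint BC.1 & BC.2]]])).

Definition code : seq 'M[F]_(t, p) :=
  colsT1 ++ flatten [seq colsTr r | r <- iota 2 (s - 1)].

Definition beta : nat :=
  (xi 1 * (p - t + 1) +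
   \sum_(2 <= r < s.+1) (t - 1) * xi r * 'C(p - t + 1, (r - 1) * t + 1))%N.

Definition gamma : nat :=
  ((p - t + 1) * \sum_(1 <= r < s) xi r.+1 * 'C(p - t, r * t))%N.
End Construction.

(* Main.v *)
Require Import Defs.
From mathcomp Require Import all_boot all_order all_algebra zify ring.
Set Implicit Arguments. Unset Strict Implicit. Unset Printing Implicit Defensive.
Import GRing.Theory.

Lemma card_nth (T : Type) (x0 : T) (sq : seq T) n (P : pred T) : n = size sq ->
  #|[set j : 'I_n | P (nth x0 sq j)]| = count P sq.
Proof.
move=> ->; rewrite -sum1_count (big_nth x0) big_mkord -sum1_card.
by apply: eq_bigl => j; rewrite inE.
Qed.

Lemma count_enum_set (X : finType) (P Q : pred X) :
  count Q (enum [set x | P x]) = #|[set x | P x && Q x]|.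
Proof.
rewrite -sum1_count big_enum_cond /= -sum1_card; apply: eq_bigl => x.
by rewrite !inE.
Qed.

Lemma match_inj (I : finType) (K : eqType) (f : I -> K) (X Y : {set I}) :
  (forall k, #|[set x in X | f x == k]| <= #|[set y in Y | f y == k]|) ->
  #|X| <= #|Y| /\
  exists g : I -> I, {in X &, injective g} /\ {in X, forall x, g x \in Y /\ f (g x) = f x}.
Proof.
move=> H.
pose g x := nth x (enum [set y in Y | f y == f x]) (index x (enum [set x' in X | f x' == f x])).
have gP : {in X, forall x, g x \in [set y in Y | f y == f x]}.
  move=> x xX; rewrite /g -mem_enum; apply: mem_nth.
  rewrite -cardE; apply: leq_trans (H (f x)).
  by rewrite cardE index_mem mem_enum inE xX eqxx.
have gP' : {in X, forall x, g x \in Y /\ f (g x) = f x}.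
  by move=> x /gP; rewrite inE => /andP[-> /eqP].
have ginj : {in X &, injective g}.
  move=> x y xX yX eq.
  have fxy : f x = f y by rewrite -(gP' x xX).2 eq (gP' y yX).2.
  have bx : index x (enum [set x' in X | f x' == f y]) < size (enum [set y0 in Y | f y0 == f y]).
    rewrite -cardE; apply: leq_trans (H (f y)).
    by rewrite cardE index_mem mem_enum inE xX fxy eqxx.
  have by_ : index y (enum [set x' in X | f x' == f y]) < size (enum [set y0 in Y | f y0 == f y]).
    rewrite -cardE; apply: leq_trans (H (f y)).
    by rewrite cardE index_mem mem_enum inE yX eqxx.
  move: eq; rewrite /g fxy (set_nth_default x _ by_) => /eqP.
  rewrite nth_uniq ?enum_uniq //.
  move/eqP/(index_inj x); apply; by rewrite mem_enum inE ?xX ?yX ?fxy eqxx.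
split; last by exists g.
rewrite -(card_in_imset ginj); apply: subset_leq_card; apply/subsetP => y.
by case/imsetP=> x xX ->; case: (gP' x xX).
Qed.
Lemma bin_mul2 n a c : 'C(n, a + c) * 'C(a + c, c) = 'C(n, a) * 'C(n - a, c).
Proof.
case: (leqP (a + c) n) => H; last first.
  rewrite bin_small // mul0n; case: (ltnP n a) => Ha; first by rewrite bin_small.
  rewrite (@bin_small (n - a) c) ?muln0 //; lia.
have h1 := bin_fact H.
have h2 := @bin_fact (a + c) c (leq_addl _ _).
have h3 := @bin_fact n a (leq_trans (leq_addr _ _) H).
have h4 := @bin_fact (n - a) c ltac:(lia).
have e1 : a + c - c = a by lia.
have e2 : n - a - c = n - (a + c) by lia.
rewrite e1 in h2; rewrite e2 in h4.
apply/eqP; rewrite -(@eqn_pmul2r (a`! * c`! * (n - (a + c))`!)); last first.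
  by rewrite !muln_gt0 !fact_gt0.
apply/eqP.
transitivity n`!.
  rewrite -h1 -h2; ring.
rewrite -h3 -h4; ring.
Qed.
Lemma cnt_disj (T : finType) (X : {set T}) n :
  #|[set C : {set T} | (#|C| == n) && [disjoint C & X]]| = 'C(#|T| - #|X|, n).
Proof.
have -> : #|T| - #|X| = #|~: X| by rewrite -(cardsC X) addKn.
rewrite -cards_draws; apply: eq_card => C; rewrite !inE.
by rewrite disjoints_subset andbC.
Qed.

Lemma cnt_disj1 (T : finType) (X : {set T}) (i : T) n : i \notin X ->
  #|[set C : {set T} | [&& #|C| == n.+1, i \in C & [disjoint C & X]]]| =
  'C(#|T| - #|X| - 1, n).
Proof.
move=> iX.
have -> : [set C : {set T} | [&& #|C| == n.+1, i \in C & [disjoint C & X]]] =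
  [set i |: C | C in [set C : {set T} | (#|C| == n) && [disjoint C & i |: X]]].
  apply/setP => C; rewrite inE; apply/idP/imsetP.
  - case/and3P => /eqP cC iC dC; exists (C :\ i); last by rewrite setD1K.
    rewrite inE; apply/andP; split.
      by move: cC; rewrite (cardsD1 i) iC add1n => -[->].
    rewrite disjoints_subset; apply/subsetP => x; rewrite !inE => /andP[xi xC].
    rewrite negb_or xi /=; move: dC; rewrite disjoints_subset => /subsetP/(_ x xC).
    by rewrite inE.
  - case=> C'; rewrite inE => /andP[/eqP cC dC] ->.
    have iC' : i \notin C'.
      apply/negP => iC; move: dC; rewrite disjoints_subset => /subsetP/(_ i iC).
      by rewrite !inE eqxx.
    apply/and3P; split; first by rewrite cardsU1 iC' cC.
      by rewrite setU11.
    rewrite disjoints_subset.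
    apply/subsetP => x; rewrite !inE => /orP[/eqP -> | xC]; first by rewrite iX.
    move: dC; rewrite disjoints_subset => /subsetP/(_ x xC); rewrite !inE.
    by rewrite negb_or => /andP[].
rewrite card_in_imset; last first.
  move=> A B; rewrite !inE => /andP[_ dA] /andP[_ dB] eq.
  have niA : i \notin A.
    apply/negP => iA; move: dA; rewrite disjoints_subset => /subsetP/(_ i iA).
    by rewrite !inE eqxx.
  have niB : i \notin B.
    apply/negP => iB; move: dB; rewrite disjoints_subset => /subsetP/(_ i iB).
    by rewrite !inE eqxx.
  by rewrite -(setU1K niA) eq setU1K.
by rewrite cnt_disj cardsU1 iX add1n subnS -subn1.
Qed.

Lemma cnt_pair (T : finType) (P : pred T) (Q : T -> pred T) :
  #|[set BC : T * T | P BC.1 && Q BC.1 BC.2]| = \sum_(B | P B) #|[set C | Q B C]|.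
Proof.
rewrite -sum1_card.
under [RHS]eq_bigr do rewrite -sum1_card big_mkcond.
rewrite pair_big /= [LHS]big_mkcond [RHS]big_mkcond /=.
apply: eq_bigr => [[B C]] _ /=; rewrite !inE /=.
by case: (P B) => //=.
Qed.

Lemma mkcol_sub (F : fieldType) t p (cells : seq 'rV[F]_p) x :
  (size cells <= t)%N -> x \in cells -> (x <= mkcol t cells)%MS.
Proof.
move=> st xc; have lt : (index x cells < t)%N by apply: leq_trans st; rewrite index_mem.
have -> : x = row (Ordinal lt) (mkcol t cells).
  by apply/rowP => j; rewrite !mxE /= nth_index.
exact: row_sub.
Qed.

Lemma span_in (F : fieldType) t p (C : seq 'M[F]_(t, p)) (S : {set 'I_(size C)}) c (A : 'rV[F]_p) :
  c \in S -> (A <= nth 0%R C c)%MS -> (A <= cols_span S)%MS.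
Proof.
move=> cS sA; rewrite /cols_span; apply: (sumsmx_sup c) => //.
by rewrite genmxE.
Qed.

Lemma count3 (X : eqType) (a b c : pred X) (sq : seq X) :
  {in sq, forall x, (a x + b x + c x = 1)%N} ->
  (count a sq + count b sq + count c sq = size sq)%N.
Proof.
elim: sq => //= x sq IH H.
have := H x (mem_head _ _); have := IH (fun y ys => H y (mem_behead (s := x :: sq) ys)).
lia.
Qed.

Section Main.
Variables (F : finFieldType) (s t p : nat) (xi : nat -> nat).
Hypotheses (s2 : (2 <= s)%N) (t2 : (2 <= t)%N) (ep : p = (s * t)%N).

Local Notation T := 'I_p.
Definition Lab := (nat * ({set T} * {set T}))%type.
Definition okr (r : nat) (BC : {set T} * {set T}) :=
  [&& #|BC.1| == t.-1, #|BC.2| == ((r - 1) * t).+1 & [disjoint BC.1 & BC.2]].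
Definition labs : seq Lab :=
  flatten (map (fun A : {set T} => nseq (xi 1) (1%N, (set0, A)))
            (enum [set A : {set T} | #|A| == t])) ++
  flatten [seq flatten (map (fun BC => nseq (xi r) (r, BC))
                           (enum [set BC | okr r BC])) | r <- iota 2 (s - 1)].
Definition colOf (l : Lab) : 'M[F]_(t, p) :=
  if l.1 == 1%N then mkcol t (map (@unitv F p) (enum l.2.2))
  else mkcol t (map (@unitv F p) (enum l.2.1) ++ [:: (\sum_(c in l.2.2) unitv F c)%R]).

Lemma codeE : code F s t p xi = map colOf labs.
Proof.
rewrite /code /labs map_cat; congr (_ ++ _).
  rewrite /colsT1 map_flatten -map_comp; congr flatten; apply: eq_map => A /=.
  by rewrite map_nseq.
rewrite map_flatten -map_comp; congr flatten; apply/eq_in_map => r.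
rewrite mem_iota => /andP[r2 _] /=.
rewrite /colsTr map_flatten -map_comp; congr flatten; apply: eq_map => BC /=.
rewrite map_nseq /colOf /=.
by have -> : (r == 1%N) = false by apply/eqP; lia.
Qed.

Definition wf (l : Lab) :=
  ((l.1 == 1%N) && (l.2.1 == set0) && (#|l.2.2| == t)) ||
  ((2 <= l.1 <= s)%N && okr l.1 l.2).

Lemma labs_wf l : l \in labs -> wf l.
Proof.
rewrite mem_cat => /orP[].
  case/flattenP => x /mapP[A]; rewrite mem_enum inE => cA -> /nseqP[-> _].
  by rewrite /wf /= eqxx cA.
case/flattenP => x /mapP[r]; rewrite mem_iota => /andP[r2 rs] ->.
case/flattenP => y /mapP[BC]; rewrite mem_enum inE => oBC -> /nseqP[-> _].
rewrite /wf /= oBC andbT; apply/orP; right; apply/andP; split => //; lia.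
Qed.


Lemma cnt_fn (X Y : Type) (Q : pred Y) (h : X -> Y) n (sq : seq X) :
  count Q (flatten (map (fun x => nseq n (h x)) sq)) = (n * count (fun x => Q (h x)) sq)%N.
Proof. elim: sq => [|x sq IH] /=; first by rewrite muln0. by rewrite count_cat count_nseq IH; case: (Q (h x)) => /=; lia. Qed.

Lemma count_labs (Q : pred Lab) : count Q labs =
  (xi 1 * #|[set A : {set T} | (#|A| == t) && Q (1%N, (set0, A))]| +
  \sum_(r <- iota 2 (s - 1)) xi r * #|[set BC | okr r BC && Q (r, BC)]|)%N.
Proof.
rewrite count_cat cnt_fn count_enum_set; congr (_ + _)%N.
rewrite count_flatten -map_comp sumnE big_map; apply: eq_bigr => r _.
by rewrite /= (cnt_fn Q (pair r)) count_enum_set.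
Qed.


Lemma cnt_pair_const (P : pred {set T}) (Q : {set T} -> pred {set T}) c :
  (forall B, P B -> #|[set C | Q B C]| = c) ->
  #|[set BC : {set T} * {set T} | P BC.1 && Q BC.1 BC.2]| = (#|[set B | P B]| * c)%N.
Proof.
move=> H; rewrite cnt_pair -sum_nat_const; apply: eq_big => [B|B]; first by rewrite inE.
exact: H.
Qed.

Lemma disj0 (A : {set T}) : [disjoint A & (set0 : {set T})].
Proof. by rewrite -setI_eq0 setI0. Qed.

Variable i : T.
Definition single (l : Lab) := (i \in l.2.1) || ((l.1 == 1%N) && (i \in l.2.2)).
Definition upper (l : Lab) := (l.1 != 1%N) && (i \in l.2.2).
Definition lower (l : Lab) := (i \notin l.2.1) && (i \notin l.2.2).
Definition key (l : Lab) : nat * {set T} :=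
  if upper l then (l.1, l.2.2 :\ i) else (l.1.+1, l.2.1 :|: l.2.2).

Definition Sf := (xi 1 * 'C(p.-1, t.-1) +
  \sum_(r <- iota 2 (s - 1)) xi r * ('C(p.-1, t.-2) * 'C(p - t.-1, ((r - 1) * t).+1)))%N.
Definition Uf :=
  (\sum_(r <- iota 2 (s - 1)) xi r * ('C(p.-1, t.-1) * 'C(p - t, (r - 1) * t)))%N.

Lemma count_single : count single labs = Sf.
Proof.
rewrite count_labs /Sf; congr (_ * _ + _)%N.
  have := @cnt_disj1 T set0 i t.-1 (negbT (in_set0 i)); rewrite card_ord cards0 subn0 subn1 => <-.
  apply: eq_card => A; rewrite !inE /single /=.
  rewrite disj0 andbT prednK ?in_set0 //; lia.
rewrite big_seq [RHS]big_seq; apply: eq_bigr => r; rewrite mem_iota => /andP[r2 _].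
congr (_ * _)%N.
have -> : #|[set BC | okr r BC && single (r, BC)]| =
  #|[set BC : {set T} * {set T} | ((#|BC.1| == t.-1) && (i \in BC.1)) &&
      ((#|BC.2| == ((r - 1) * t).+1) && [disjoint BC.2 & BC.1])]|.
  apply: eq_card => -[B C]; rewrite !inE /okr /single /=.
  have -> : (r == 1%N) = false by apply/eqP; lia.
  rewrite orbF disjoint_sym; by case: (#|B| == t.-1); case: (i \in B); rewrite /= ?andbT ?andbF.
rewrite (@cnt_pair_const (fun B => (#|B| == t.-1) && (i \in B)) (fun B C => (#|C| == ((r - 1) * t).+1) && [disjoint C & B]) 'C(p - t.-1, ((r - 1) * t).+1)); last first.
  by move=> B /andP[/eqP cB _]; rewrite cnt_disj card_ord cB.
congr (_ * _)%N.
have := @cnt_disj1 T set0 i t.-2 (negbT (in_set0 i)); rewrite card_ord cards0 subn0 subn1 => <-.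
apply: eq_card => A; rewrite !inE.
rewrite disj0 andbT; have -> : (t.-2).+1 = t.-1 by lia.
by [].
Qed.


Lemma count_upper : count upper labs = Uf.
Proof.
rewrite count_labs /Uf.
have -> : #|[set A : {set T} | (#|A| == t) && upper (1%N, (set0, A))]| = 0%N.
  by apply: eq_card0 => A; rewrite !inE /upper /= andbF.
rewrite muln0 add0n big_seq [RHS]big_seq; apply: eq_bigr => r; rewrite mem_iota => /andP[r2 _].
congr (_ * _)%N.
have -> : #|[set BC | okr r BC && upper (r, BC)]| =
  #|[set BC : {set T} * {set T} | ((#|BC.1| == t.-1) && [disjoint BC.1 & [set i]]) &&
      [&& #|BC.2| == ((r - 1) * t).+1, i \in BC.2 & [disjoint BC.2 & BC.1]]]|.
  apply: eq_card => -[B C]; rewrite !inE /okr /upper /=.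
  have -> : (r == 1%N) = false by apply/eqP; lia.
  have -> : [disjoint B & [set i]] = (i \notin B) by rewrite disjoint_sym disjoints1.
  apply/idP/idP.
    case/and3P => /and3P[-> -> dBC] _ iC; rewrite iC /= (disjointFl dBC iC) /=.
    by rewrite disjoint_sym.
  case/and4P => /andP[-> _] -> -> dCB; by rewrite disjoint_sym dCB.
rewrite (@cnt_pair_const (fun B => (#|B| == t.-1) && [disjoint B & [set i]])
   (fun B C => [&& #|C| == ((r - 1) * t).+1, i \in C & [disjoint C & B]]) 'C(p - t, (r - 1) * t)); last first.
  move=> B /andP[/eqP cB dB]; rewrite cnt_disj1 ?card_ord ?cB; last first.
    by move: dB; rewrite disjoint_sym disjoints1.
  congr 'C(_, _); lia.
rewrite cnt_disj card_ord cards1 subn1.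
by [].
Qed.


Lemma sum_collapse (sq : seq nat) (G : nat -> nat) r0 :
  r0 \in sq -> uniq sq -> (forall r, r != r0 -> G r = 0%N) ->
  (\sum_(r <- sq) G r = G r0)%N.
Proof.
move=> r0s us H; rewrite (bigD1_seq r0) //= big1_seq ?addn0 //.
by move=> r /andP[rr0 _]; exact: H.
Qed.

Definition validk (k : nat * {set T}) :=
  [&& (2 <= k.1 <= s)%N, i \notin k.2 & #|k.2| == ((k.1 - 1) * t)%N].

Lemma up_valid l : l \in labs -> upper l -> validk (key l).
Proof.
move=> /labs_wf + ul; rewrite /wf /key ul; move: ul => /andP[l1 iC].
rewrite (negbTE l1) /= => /andP[rs /and3P[_ cC _]].
rewrite /validk /= rs !inE eqxx /=; move: cC; rewrite (cardsD1 i) iC add1n => /eqP[->].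

by [].
Qed.

Lemma low_valid l : l \in labs -> lower l -> validk (key l).
Proof.
move=> /labs_wf + /andP[iB iC].
have -> : key l = (l.1.+1, l.2.1 :|: l.2.2) by rewrite /key /upper (negbTE iC) andbF.
rewrite /wf /validk /=.
case/orP => [/andP[/andP[/eqP -> /eqP ->] /eqP cC]|/andP[/andP[l2 ls] /and3P[/eqP cB /eqP cC dBC]]].
  by rewrite /= set0U iC cC mul1n eqxx; lia.
have cU : #|l.2.1 :|: l.2.2| = (l.1 * t)%N.
  rewrite cardsU (_ : l.2.1 :&: l.2.2 = set0) ?cards0 ?subn0 ?cB ?cC.
    move: l2; case: (l.1) => [|n] //= _; rewrite subSS subn0 mulSn; lia.
  by apply/eqP; rewrite setI_eq0.
rewrite /= !inE negb_or iB iC cU /=.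
have -> : (l.1.+1 - 1 = l.1)%N by lia.
rewrite eqxx andbT; apply/andP; split; first by lia.
rewrite ltn_neqAle ls andbT; apply/eqP => els.
have : #|l.2.1 :|: l.2.2| < #|T|.
  have sub : l.2.1 :|: l.2.2 \subset [set~ i].
    apply/subsetP => x; rewrite !inE; case: eqP => // -> /orP[].
      by rewrite (negbTE iB).
    by rewrite (negbTE iC).
  rewrite (leq_ltn_trans (subset_leq_card sub)) // cardsC1 card_ord ltn_predL.
  exact: (leq_ltn_trans (leq0n _) (ltn_ord i)).
by rewrite cU card_ord els ep ltnn.
Qed.


Lemma cnt_key0 (P : pred Lab) k : ~~ validk k ->
  (forall l, l \in labs -> P l -> validk (key l)) ->
  count (fun l => P l && (key l == k)) labs = 0%N.
Proof.
move=> nk H; apply/eqP; rewrite -leqn0 leqNgt -has_count; apply/hasPn => l lin.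
apply/negP => /andP[Pl /eqP ek]; by move: (H l lin Pl); rewrite ek (negbTE nk).
Qed.

Lemma cnt_up_key r0 D : validk (r0, D) ->
  count (fun l => upper l && (key l == (r0, D))) labs =
  (xi r0 * 'C(p - ((r0 - 1) * t).+1, t.-1))%N.
Proof.
case/and3P => /andP[r2 rs] /= iD /eqP cD; move: r2 rs => /= r2 rs.
rewrite count_labs.
have -> : #|[set A : {set T} | (#|A| == t) && (upper (1%N, (set0, A)) && (key (1%N, (set0, A)) == (r0, D)))]| = 0%N.
  by apply: eq_card0 => A; rewrite !inE /upper /= andbF.
rewrite muln0 add0n (@sum_collapse _ _ r0) ?iota_uniq //; first last.
- move=> r rr0; apply/eqP; rewrite muln_eq0; apply/orP; right; apply/eqP.
  apply: eq_card0 => -[B C]; rewrite !inE /key /=.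
  case: (upper _); last by rewrite !andbF.
  case: (@eqP _ (r, C :\ i) (r0, D)) => [[er _]|_]; [by move: rr0; rewrite er eqxx | by rewrite !andbF].
- by rewrite mem_iota; apply/andP; split; lia.
congr (_ * _)%N.
have -> : #|[set BC | okr r0 BC && (upper (r0, BC) && (key (r0, BC) == (r0, D)))]| =
  #|[set BC : {set T} * {set T} | ((#|BC.1| == t.-1) && [disjoint BC.1 & i |: D]) &&
      (BC.2 == i |: D)]|.
  apply: eq_card => -[B C]; rewrite !inE /okr /key /upper /=.
  have -> : (r0 == 1%N) = false by apply/eqP; lia.
  case iC: (i \in C) => /=; last first.
    rewrite andbF; case: (@eqP _ C (i |: D)) => [eC|_]; [by rewrite eC setU11 in iC | by rewrite andbF].
  rewrite xpair_eqE eqxx /=; apply/idP/idP.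
    case/andP => /and3P[cB _ dBC] /eqP CD.
    have eC : C = i |: D by rewrite -CD setD1K.
    by rewrite cB -eC dBC eC eqxx.
  case/andP => /andP[cB dB] /eqP eC; rewrite eC cB dB cardsU1 iD cD setU1K //.
  by rewrite !eqxx.
rewrite (@cnt_pair_const (fun B => (#|B| == t.-1) && [disjoint B & i |: D])
   (fun B C => C == i |: D) 1%N); last first.
  by move=> B _; rewrite (_ : [set C | C == i |: D] = [set i |: D]) ?cards1 //; apply/setP => C; rewrite !inE.
by rewrite muln1 cnt_disj card_ord cardsU1 iD cD.
Qed.


Lemma lowkey l : lower l -> key l = (l.1.+1, l.2.1 :|: l.2.2).
Proof. by case/andP => _ iC; rewrite /key /upper (negbTE iC) andbF. Qed.

Lemma lowerkey_eq l k : (lower l && (key l == k)) = (lower l && ((l.1.+1, l.2.1 :|: l.2.2) == k)).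
Proof. by case lo: (lower l) => //=; rewrite lowkey. Qed.

Lemma cnt_low_key r0 D : validk (r0, D) ->
  count (fun l => lower l && (key l == (r0, D))) labs =
  (if r0 == 2%N then xi 1 else xi r0.-1 * 'C((r0 - 1) * t, t.-1))%N.
Proof.
case/and3P => /andP[r2 rs] /= iD /eqP cD; move: r2 rs => /= r2 rs.
under eq_count do rewrite lowerkey_eq.
rewrite count_labs.
case: (r0 =P 2%N) => [e2|n2].
  subst r0; rewrite big1_seq ?addn0; last first.
    move=> r /andP[_]; rewrite mem_iota => /andP[r2' _].
    apply/eqP; rewrite muln_eq0; apply/orP; right; apply/eqP.
    apply: eq_card0 => -[B C]; rewrite !inE /=.
    rewrite xpair_eqE (_ : (r.+1 == 2%N) = false) ?andbF //; apply/eqP; lia.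
  rewrite (_ : [set A : {set T} | _] = [set D]) ?cards1 ?muln1 //.
  apply/setP => A; rewrite !inE /lower /= in_set0 /= xpair_eqE eqxx set0U /=.
  case: (@eqP _ A D) => [->|_]; last by rewrite !andbF.
  by rewrite cD mul1n eqxx iD.
rewrite (_ : #|[set A : {set T} | _]| = 0%N); last first.
  apply: eq_card0 => A; rewrite !inE /= xpair_eqE (_ : (2 == r0) = false) ?andbF //.
  by apply/eqP => e; apply: n2.
rewrite muln0 add0n (@sum_collapse _ _ r0.-1) ?iota_uniq //; first last.
- move=> r rr0; apply/eqP; rewrite muln_eq0; apply/orP; right; apply/eqP.
  apply: eq_card0 => -[B C]; rewrite !inE /= xpair_eqE (_ : (r.+1 == r0) = false) ?andbF //.
  by apply/eqP => e; move: rr0; rewrite -e eqxx.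
- by rewrite mem_iota; apply/andP; split; lia.
congr (_ * _)%N.
set r := r0.-1.
have er0 : r0 = r.+1 by rewrite /r; lia.
have r2' : (2 <= r)%N by lia.
rewrite (_ : [set BC | _] = [set BC : {set T} * {set T} | ((#|BC.1| == t.-1) && (BC.1 \subset D)) &&
      (BC.2 == D :\: BC.1)]); last first.
  apply/setP => -[B C]; rewrite !inE /okr /lower /= er0 xpair_eqE eqxx /=.
  apply/idP/idP.
    case/and3P => /and3P[cB cC dBC] /andP[iB iC] /eqP eD.
    rewrite cB -eD subsetUl /=; apply/eqP/setP => x; rewrite !inE.
    case xC: (x \in C); last by case: (x \in B).
    by rewrite (disjointFl dBC xC).
  case/andP => /andP[/eqP cB sBD] /eqP eC.
  have iB : i \notin B by apply/negP => iB; move: iD; rewrite (subsetP sBD _ iB).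
  have iC : i \notin D :\: B by rewrite inE (negbTE iD) andbF.
  rewrite cB eqxx eC iB iC /=.
  apply/andP; split; first (apply/andP; split).
  - rewrite cardsDS // cD cB er0; apply/eqP.
    have -> : (r.+1 - 1 = (r - 1).+1)%N by lia.
    rewrite mulSn; set m := ((r - 1) * t)%N; lia.
  - rewrite -setI_eq0; apply/eqP/setP => x; rewrite !inE.
    by case: (x \in B); rewrite ?andbF.
  - apply/eqP/setP => x; rewrite !inE; case xB: (x \in B) => //=.
    by rewrite (subsetP sBD _ xB).
rewrite (@cnt_pair_const (fun B => (#|B| == t.-1) && (B \subset D))
   (fun B C => C == D :\: B) 1%N); last first.
  by move=> B _; rewrite (_ : [set C | C == D :\: B] = [set D :\: B]) ?cards1 //; apply/setP => C; rewrite !inE.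
rewrite muln1 -cD -cards_draws; apply: eq_card => B; rewrite !inE.
by rewrite andbC.
Qed.


Lemma sumU (A B : {set T}) (G : T -> 'rV[F]_p) : [disjoint A & B] ->
  (\sum_(c in A :|: B) G c = \sum_(c in A) G c + \sum_(c in B) G c)%R.
Proof.
move=> dAB; rewrite -bigU //; apply: eq_bigl => c; by rewrite !inE.
Qed.

Lemma colOf_single l : wf l -> single l -> (unitv F i <= colOf l)%MS.
Proof.
rewrite /single /colOf.
case/orP => [/andP[/andP[/eqP -> /eqP ->] /eqP cC] | /andP[/andP[l2 ls] /and3P[/eqP cB /eqP cC dBC]]].
  rewrite in_set0 eqxx /= => iC; apply: mkcol_sub; first by rewrite size_map -cardE cC.
  by apply: map_f; rewrite mem_enum.
have -> : (l.1 == 1%N) = false by apply/eqP; lia.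
rewrite andFb orbF => iB; apply: mkcol_sub.
  by rewrite size_cat size_map -cardE cB /=; lia.
by rewrite mem_cat; apply/orP; left; apply: map_f; rewrite mem_enum.
Qed.

Lemma colOf_sumC l : wf l -> l.1 != 1%N -> ((\sum_(c in l.2.2) unitv F c)%R <= colOf l)%MS.
Proof.
rewrite /colOf.
case/orP => [/andP[/andP[/eqP -> _] _] | /andP[/andP[l2 ls] /and3P[/eqP cB /eqP cC dBC]]].
  by rewrite eqxx.
move=> l1; rewrite (negbTE l1); apply: mkcol_sub.
  by rewrite size_cat size_map -cardE cB /=; lia.
by rewrite mem_cat mem_seq1 eqxx orbT.
Qed.

Lemma colOf_sumBC l : wf l -> ((\sum_(c in l.2.1 :|: l.2.2) unitv F c)%R <= colOf l)%MS.
Proof.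
move=> wl; move: (wl); rewrite /colOf.
case/orP => [/andP[/andP[/eqP -> /eqP ->] /eqP cC] | /andP[/andP[l2 ls] /and3P[/eqP cB /eqP cC dBC]]].
  rewrite set0U eqxx; apply: summx_sub => c cC'; apply: mkcol_sub.
    by rewrite size_map -cardE cC.
  by apply: map_f; rewrite mem_enum.
have l1 : (l.1 == 1%N) = false by apply/eqP; lia.
rewrite sumU //; apply: addmx_sub; last first.
  by have := colOf_sumC wl (negbT l1); rewrite /colOf l1.
rewrite l1; apply: summx_sub => c cB'; apply: mkcol_sub.
  by rewrite size_cat size_map -cardE cB /=; lia.
by rewrite mem_cat; apply/orP; left; apply: map_f; rewrite mem_enum.
Qed.


Hypotheses (H1 : forall r, (2 <= r <= s.-1)%N ->
     ('C(p - t, (r - 1) * t + 1) * xi r = 'C(p - t, r * t) * xi r.+1)%N)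
  (H2 : ((s - 1) * xi 1 = 'C(p - t, t) * xi 2)%N).

Lemma balance r0 : (2 <= r0 <= s)%N ->
  (xi r0 * 'C(p - ((r0 - 1) * t).+1, t.-1))%N =
  (if r0 == 2%N then xi 1 else xi r0.-1 * 'C((r0 - 1) * t, t.-1))%N.
Proof.
move=> /andP[r2 rs].
have en : (p - t = (s - 1) * t)%N by rewrite ep mulnBl mul1n.
case: (r0 =P 2%N) => [->|n2].
  set n := (p - t)%N.
  have e : (p - ((2 - 1) * t).+1 = n.-1)%N by rewrite /n mul1n; lia.
  rewrite e.
  have hd := mul_bin_diag n t.-1; rewrite prednK in hd; last by lia.
  apply/eqP; rewrite -(@eqn_pmul2l ((s - 1) * t)); last by rewrite muln_gt0; apply/andP; split; lia.
  apply/eqP.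
  transitivity (xi 2 * (n * 'C(n.-1, t.-1)))%N; first by rewrite /n en; ring.
  rewrite hd; transitivity (t * ('C(n, t) * xi 2))%N; first by ring.
  rewrite -H2; ring.
set r := r0.-1.
have er0 : r0 = r.+1 by rewrite /r; lia.
have r2' : (2 <= r <= s.-1)%N by apply/andP; split; rewrite /r; lia.
rewrite er0 subSS subn0.
have h := H1 r2'; rewrite addn1 in h.
set n := (p - t)%N; set a := ((r - 1) * t).+1; set c := t.-1.
have erm : (r * t = (r - 1) * t + t)%N.
  have -> : r = (r - 1).+1 by lia.
  by rewrite mulSn subSS subn0 addnC.
have eac : (a + c = r * t)%N by rewrite /a /c erm; lia.
have ena : (n - a = p - (r * t).+1)%N by rewrite /n /a erm; lia.
have bm := bin_mul2 n a c; rewrite eac ena in bm.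
have an : (a <= n)%N.
  have : (r * t <= (s - 1) * t)%N by rewrite leq_mul2r; apply/orP; right; lia.
  rewrite /a /n en erm; lia.
apply/eqP; rewrite -(@eqn_pmul2l 'C(n, a)); last by rewrite bin_gt0.
apply/eqP.
transitivity (xi r.+1 * ('C(n, a) * 'C(n - a, c)))%N; first by rewrite ena; ring.
rewrite ena -bm; transitivity (('C(n, r * t) * xi r.+1) * 'C(r * t, c))%N; first by ring.
rewrite -h; ring.
Qed.


Lemma single_upper l : wf l -> single l -> ~~ upper l.
Proof.
rewrite /single /upper.
case/orP => [/andP[/andP[/eqP -> _] _] | /andP[_ /and3P[_ _ dBC]]]; first by rewrite eqxx.
case/orP => [iB|/andP[/eqP -> _]]; last by rewrite eqxx.
by rewrite (disjointFr dBC iB) andbF.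
Qed.

Lemma partition3 l : wf l -> (single l + upper l + lower l = 1)%N.
Proof.
move=> wl; have su := single_upper wl; move: su.
rewrite /single /upper /lower.
case: (i \in l.2.1); case: (i \in l.2.2); case: (l.1 == 1%N) => //=; by move=> /(_ isT).
Qed.

Lemma key_count k : count (fun l => upper l && (key l == k)) labs =
                    count (fun l => lower l && (key l == k)) labs.
Proof.
case vk: (validk k).
  move: vk; case: k => r0 D vk; rewrite cnt_up_key // cnt_low_key // balance //.
  by case/and3P: vk.
rewrite !cnt_key0 ?vk //.
  by move=> l lin; apply: low_valid.
by move=> l lin; apply: up_valid.
Qed.

Definition dl : Lab := (0%N, (set0, set0)).
Definition lab (j : 'I_(size (code F s t p xi))) := nth dl labs j.
Definition Up := [set j | upper (lab j)].
Definition Low := [set j | lower (lab j)].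
Definition Sing := [set j | single (lab j)].

Lemma szm : size (code F s t p xi) = size labs.
Proof. by rewrite codeE size_map. Qed.

Lemma lab_in j : lab j \in labs.
Proof. by rewrite /lab mem_nth // -szm. Qed.

Lemma colj (j : 'I_(size (code F s t p xi))) : nth 0%R (code F s t p xi) j = colOf (lab j).
Proof.
have : (j < size labs)%N by rewrite -szm.
rewrite /lab; move: (nat_of_ord j) => x hx.
by rewrite codeE (nth_map dl).
Qed.

Lemma card_lab (P : pred Lab) : #|[set j | P (lab j)]| = count P labs.
Proof. exact: (@card_nth _ dl labs _ P szm). Qed.

Lemma up_low_match :
  #|Up| = #|Low| /\
  exists g, {in Up &, injective g} /\ {in Up, forall x, g x \in Low /\ key (lab (g x)) = key (lab x)}.
Proof.
have c1 : forall (P : pred Lab) k, #|[set x in [set j | P (lab j)] | key (lab x) == k]| =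
           count (fun l => P l && (key l == k)) labs.
  by move=> P k; rewrite -card_lab; apply: eq_card => x; rewrite !inE.
have h1 : forall k, #|[set x in Up | key (lab x) == k]| <= #|[set y in Low | key (lab y) == k]|.
  by move=> k; rewrite /Up /Low !c1 key_count.
have h2 : forall k, #|[set x in Low | key (lab x) == k]| <= #|[set y in Up | key (lab y) == k]|.
  by move=> k; rewrite /Up /Low !c1 key_count.
have [le1 [g [gi gP]]] := @match_inj _ _ (fun j => key (lab j)) Up Low h1.
have [le2 _] := @match_inj _ _ (fun j => key (lab j)) Low Up h2.
split; first by apply/eqP; rewrite eqn_leq le1 le2.
by exists g.
Qed.

Lemma size_code_eq : size (code F s t p xi) = (Sf + 2 * Uf)%N.
Proof.
have := count3 (a := single) (b := upper) (c := lower) (sq := labs).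
rewrite -szm => <-; last by move=> l /labs_wf; apply: partition3.
rewrite count_single count_upper -(card_lab lower) -/Low.
case: up_low_match => <- _; rewrite /Up card_lab count_upper; lia.
Qed.


Lemma pir : exists S : 'I_(Sf + Uf) -> {set 'I_(size (code F s t p xi))},
  (forall j j' : 'I_(Sf + Uf), j != j' -> [disjoint S j & S j']) /\
  (forall j, (unitv F i <= cols_span (S j))%MS).
Proof.
case: up_low_match => _ [g [gi gP]].
set W := Sing :|: Up.
have cW : #|W| = (Sf + Uf)%N.
  rewrite cardsU (_ : Sing :&: Up = set0) ?cards0 ?subn0.
    by rewrite /Sing /Up !card_lab count_single count_upper.
  apply/setP => j; rewrite !inE; apply/negP => /andP[sj uj].
  by move: (single_upper (labs_wf (lab_in j)) sj); rewrite uj.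
pose Rec w := if w \in Up then [set w; g w] else [set w].
have eW : (Sf + Uf = #|W|)%N by rewrite cW.
exists (fun j => Rec (enum_val (cast_ord eW j))).
have notlow : forall w, w \in W -> ~~ lower (lab w).
  move=> w; rewrite !inE => /orP[]; rewrite /single /upper /lower.
  - by case/orP => [->|/andP[_ ->]]; rewrite ?andbF.
  - by case/andP => _ ->; rewrite andbF.
have hR : forall v y, y \in Rec v -> y = v \/ (v \in Up /\ y = g v).
  move=> v y; rewrite /Rec; case: ifP => vU; rewrite !inE.
    by case/orP => /eqP ->; [left | right].
  by move/eqP ->; left.
split.
  move=> j j' njj'.
  set w := enum_val _; set w' := enum_val _.
  have ww' : w != w'.
    apply: contra njj' => /eqP /enum_val_inj /cast_ord_inj ->; done.
  have wW : w \in W by apply: enum_valP.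
  have w'W : w' \in W by apply: enum_valP.
  rewrite -setI_eq0; apply/eqP/setP => y; rewrite inE in_set0.
  apply/negP => /andP[/hR yR /hR yR'].
  case: yR => [ew | [wU ew]]; case: yR' => [ew' | [w'U ew']].
  - by move: ww'; rewrite -ew -ew' eqxx.
  - have := (gP w' w'U).1; rewrite inE -ew' ew => lw.
    by move: (notlow w wW); rewrite lw.
  - have := (gP w wU).1; rewrite inE -ew ew' => lw.
    by move: (notlow w' w'W); rewrite lw.
  - by move: ww'; rewrite (gi w w' wU w'U) ?eqxx // -ew -ew'.
move=> j; set w := enum_val _.
have wW : w \in W by apply: enum_valP.
have wl := labs_wf (lab_in w).
rewrite /Rec; case: ifP => wU; last first.
  apply: (span_in (c := w)); first by rewrite inE.
  rewrite colj; apply: colOf_single => //.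
  by move: wW; rewrite in_setU wU orbF inE.
have [gL kE] := gP w wU.
have wl' := labs_wf (lab_in (g w)).
move: (wU) (gL); rewrite !inE => /andP[l1 iC] lo.
move: kE; rewrite lowkey // /key /upper l1 iC /= => -[_ E].
have e : unitv F i = (\sum_(c in (lab w).2.2) unitv F c -
                     \sum_(c in (lab (g w)).2.1 :|: (lab (g w)).2.2) unitv F c)%R.
  by rewrite E (big_setD1 i iC) /= addrK.
rewrite e; apply: addmx_sub.
  apply: (span_in (c := w)); first by rewrite !inE eqxx.
  by rewrite colj; apply: colOf_sumC.
rewrite eqmx_opp; apply: (span_in (c := g w)); first by rewrite !inE eqxx orbT.
by rewrite colj; apply: colOf_sumBC.
Qed.

End Main.

Lemma arithS s t p (xi : nat -> nat) : (2 <= s)%N -> (2 <= t)%N -> p = (s * t)%N ->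
  ((t - 1) * Sf s t p xi = 'C(p - 1, t - 2) * beta s t p xi)%N.
Proof.
move=> s2 t2 ep.
have hb := mul_bin_left (p - 1) (t - 2).
have e1 : (t - 2).+1 = t - 1 by lia.
have e2 : (p - 1 - (t - 2) = p - t + 1)%N by rewrite ep; nia.
rewrite e1 e2 in hb.
rewrite /Sf /beta mulnDr mulnDr.
have -> : index_iota 2 s.+1 = iota 2 (s - 1) by rewrite /index_iota; congr iota; lia.
rewrite !big_distrr /=; congr (_ + _)%N.
  have -> : p.-1 = (p - 1)%N by lia.
  have -> : t.-1 = (t - 2).+1 by lia.
  rewrite e1 mulnCA hb; ring.
apply: eq_bigr => r _.
have -> : p.-1 = (p - 1)%N by lia.
have -> : t.-2 = (t - 2)%N by lia.
have -> : (p - t.-1 = p - t + 1)%N by rewrite ep; nia.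
rewrite !addn1; ring.
Qed.

Lemma arithU s t p (xi : nat -> nat) : (2 <= s)%N -> (2 <= t)%N -> p = (s * t)%N ->
  ((t - 1) * Uf s t p xi = 'C(p - 1, t - 2) * gamma s t p xi)%N.
Proof.
move=> s2 t2 ep.
have hb := mul_bin_left (p - 1) (t - 2).
have e1 : (t - 2).+1 = t - 1 by lia.
have e2 : (p - 1 - (t - 2) = p - t + 1)%N by rewrite ep; nia.
rewrite e1 e2 in hb.
rewrite /Uf /gamma.
have -> : index_iota 1 s = iota 1 (s - 1) by rewrite /index_iota; congr iota; lia.
have -> : iota 2 (s - 1) = map S (iota 1 (s - 1)) by rewrite (iotaDl 1 1).
rewrite big_map !big_distrr /=.
apply: eq_bigr => r _.
have -> : p.-1 = (p - 1)%N by lia.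
have -> : t.-1 = (t - 2).+1 by lia.
have -> : (r.+1 - 1 = r)%N by lia.
rewrite e1.
transitivity (xi r.+1 * 'C(p - t, r * t) * ((t - 1) * 'C(p - 1, t - 1)))%N; first by ring.
rewrite hb; ring.
Qed.

Import Num.Theory.
Local Open Scope ring_scope.

Lemma cancel_nat (c x y : nat) : c != 0%N ->
  ((c * x)%:R / (c * y)%:R : rat) = x%:R / y%:R.
Proof.
move=> c0; rewrite !natrM -mulf_div divff ?mul1r //.
by rewrite pnatr_eq0.
Qed.

Lemma ratio_eq (S U b g c d : nat) : c != 0%N -> d != 0%N ->
  (c * S = d * b)%N -> (c * U = d * g)%N ->
  ((S + U)%:R / (S + 2 * U)%:R : rat) = (b + g)%:R / (b + 2 * g)%:R.
Proof.
move=> c0 d0 hS hU.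
rewrite -(cancel_nat (S + U) (S + 2 * U) c0) -(cancel_nat (b + g) (b + 2 * g) d0).
congr (_%:R / _%:R); rewrite !mulnDr ?hS ?hU //.
by rewrite !muln0.
Qed.

Theorem theorem8 (F : finFieldType) (s t p : nat) (xi : nat -> nat) :
  (2 <= s)%N -> (2 <= t)%N -> p = (s * t)%N ->
  (forall r, (1 <= r <= s)%N -> (0 < xi r)%N) ->
  (forall r, (2 <= r <= s.-1)%N ->
     ('C(p - t, (r - 1) * t + 1) * xi r = 'C(p - t, r * t) * xi r.+1)%N) ->
  ((s - 1) * xi 1 = 'C(p - t, t) * xi 2)%N ->
  exists k : nat,
    is_kPIR (code F s t p xi) k /\
    (k%:R / (size (code F s t p xi))%:R : rat) =
      (beta s t p xi + gamma s t p xi)%:R /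
      (beta s t p xi + 2 * gamma s t p xi)%:R.
Proof.
move=> s2 t2 ep _ H1 H2.
exists (Sf s t p xi + Uf s t p xi)%N; split.
  move=> i; exact: (pir F s2 t2 ep i H1 H2).
have p0 : (0 < p)%N by rewrite ep; lia.
rewrite (size_code_eq F s2 t2 ep (Ordinal p0) H1 H2).
have hS := arithS xi s2 t2 ep; have hU := arithU xi s2 t2 ep.
set S0 := Sf s t p xi in hS *; set U0 := Uf s t p xi in hU *.
set b := beta s t p xi in hS *; set g := gamma s t p xi in hU *.
apply: (ratio_eq _ _ hS hU); first by apply/eqP; lia.
rewrite -lt0n bin_gt0; nia.
Qed.
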